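(* Let $G$ be a graph and $t$ a positive integer. Then $\operatorname{th}_{\operatorname{H}}(G)\leq t$ if and only if there exist integers $a\geq 1$ and $b\geq 0$ with $a+b=t$ such that $G$ is isomorphic to a graph obtained from $K_a\,\square\,\overline{K_{b+1}}$ by a sequence of operations, each of which is either identifying an empty pair or deleting a complete edge.
   Context: All graphs are finite, simple and undirected. $K_a\,\square\,\overline{K_{b+1}}$ has vertex set $\{(i,j):1\leq i\leq a,\ 1\leq j\leq b+1\}$, with $(i,j)$ adjacent to $(i',j')$ iff $j=j'$ and $i\neq i'$ (each column $j$ induces a $K_a$, each row $i$ is an independent set); these edges are the complete edges. An empty pair is a pair of vertices $\{(i,j),(i,j+1)\}$ lying in the same row and in adjacent columns (tracked through the operations). Identifying an empty pair replaces its two vertices by a single vertex whose neighborhood is the union of their neighborhoods (discarding loops and multiple edges); deleting a complete edge removes one complete edge. Hopping color change rule: a blue vertex $v$ may force a white vertex $w$ to become blue if $v$ has not previously performed a force and every neighbor of $v$ is blue. For an initial blue set $B$, a chronological list of forces of $B$ is a sequence of such forces applied one at a time until no further force is possible; its underlying unordered set is a set of forces of $B$. $B$ is a hopping forcing set if some chronological list of forces of $B$ turns all vertices blue. For a set of forces $\mathcal F$ of $B$, let $\mathcal F^{(0)}=B$ and for $t\geq1$ let $\mathcal F^{(t)}$ be the set of vertices $w\notin U_{t-1}:=\bigcup_{i=0}^{t-1}\mathcal F^{(i)}$ for which there is $(v\to w)\in\mathcal F$ with $v\in U_{t-1}$ and all neighbors of $v$ in $U_{t-1}$. $\operatorname{pt}_{\operatorname{H}}(G;\mathcal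 F)$ is the least $t$ with $\bigcup_{i=0}^t\mathcal F^{(i)}=V(G)$ ($\infty$ if none); $\operatorname{pt}_{\operatorname{H}}(G;B)$ is the minimum over sets of forces $\mathcal F$ of $B$ ($\infty$ if $B$ is not a hopping forcing set). $\operatorname{th}_{\operatorname{H}}(G)=\min_{B\subseteq V(G)}\big(|B|+\operatorname{pt}_{\operatorname{H}}(G;B)\big)$. *)

(* Defs.v *)
From mathcomp Require Import all_boot.
From mathcomp Require Import boolp.

Set Implicit Arguments.
Unset Strict Implicit.
Unset Printing Implicit Defensive.

(* A graph is a symmetric irreflexive relation [e : rel T] on a finType T. *)

Section Hopping.
Variables (T : finType) (e : rel T).

Definition hop_can_force (blue used : {set T}) (v w : T) : bool :=
  [&& v \in blue, v \notin used, [forall u, e v u ==> (u \in blue)]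
    & w \notin blue].

Definition hop_stuck (blue used : {set T}) : bool :=
  [forall v, forall w, ~~ hop_can_force blue used v w].

Fixpoint chron_ok (blue used : {set T}) (s : seq (T * T)) : bool :=
  match s with
  | [::] => hop_stuck blue used
  | (v, w) :: s' => hop_can_force blue used v w &&
                    chron_ok (w |: blue) (v |: used) s'
  end.

Definition chron_list (B : {set T}) (s : seq (T * T)) : bool :=
  chron_ok B set0 s.

Definition set_of_forces (B : {set T}) (F : {set T * T}) : Prop :=
  exists s, chron_list B s /\ F = [set x in s].

Definition hopping_forcing_set (B : {set T}) : Prop :=
  exists s, chron_list B s /\
    B :|: [set w | [exists v, (v, w) \in s]] = [set: T].

Fixpoint hopU (B : {set T}) (F : {set T * T}) (t : nat) : {set T} :=
  match t with
  | 0 => B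
  | t'.+1 =>
      let U := hopU B F t' in
      U :|: [set w | [exists v, [&& (v, w) \in F, v \in U &
                                   [forall u, e v u ==> (u \in U)]]]]
  end.

(* pt_H(G;F); None encodes infinity *)
Definition ptF (B : {set T}) (F : {set T * T}) : option nat :=
  match pselect (exists t, hopU B F t == [set: T]) with
  | left h => Some (ex_minn h)
  | right _ => None
  end.

(* pt_H(G;B); None encodes infinity *)
Definition ptB (B : {set T}) : option nat :=
  if pselect (hopping_forcing_set B) then
    match pselect (exists k,
           `[< exists F, set_of_forces B F /\ ptF B F = Some k >]) with
    | left h => Some (ex_minn h)
    | right _ => None
    end
  else None.

(* th_H(G) = min_B (|B| + pt_H(G;B)).  The default branch is unreachable
   (B = V(G) gives a finite value); it returns the trivial bound |V(G)|. *)
Definition thH : nat :=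
  match pselect (exists n,
         `[< exists (B : {set T}) p, ptB B = Some p /\ n = #|B| + p >]) with
  | left h => ex_minn h
  | right _ => #|T|
  end.

End Hopping.

Definition KV (a b : nat) := ('I_a * 'I_b.+1)%type.

(* A derived graph is represented by an equivalence relation [eqv] on the
   original vertices (the classes are the current vertices) together with a
   class-compatible adjacency relation [adj]. *)
Inductive obtainable (a b : nat) : rel (KV a b) -> rel (KV a b) -> Prop :=
| obt_start :
    obtainable (fun x y => x == y)
               (fun x y => (x.2 == y.2) && (x.1 != y.1))
| obt_identify (eqv adj : rel (KV a b)) (x y : KV a b) :
    obtainable eqv adj ->
    (* {x, y} is an empty pair: same row, adjacent columns, still distinct *)
    x.1 = y.1 -> (y.2 : nat) = (x.2 : nat).+1 -> ~~ eqv x y ->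
    let eqv' := fun u v => [|| eqv u v, eqv u x && eqv v y
                                      | eqv u y && eqv v x] in
    obtainable eqv'
      (fun u v => ~~ eqv' u v &&
         [exists u', exists v', [&& eqv' u u', eqv' v v' & adj u' v']])
| obt_delete (eqv adj : rel (KV a b)) (x y : KV a b) :
    obtainable eqv adj ->
    adj x y ->
    obtainable eqv
      (fun u v => adj u v &&
         ~~ ((eqv u x && eqv v y) || (eqv u y && eqv v x))).

Definition iso_to_quotient (T : finType) (e : rel T) (a b : nat)
  (eqv adj : rel (KV a b)) : Prop :=
  exists f : T -> KV a b,
    (forall t t', eqv (f t) (f t') -> t = t') /\
    (forall v, exists t, eqv v (f t)) /\
    (forall t t', e t t' = adj (f t) (f t')).

(* Main.v *)
Require Import Defs.
From mathcomp Require Import all_boot boolp zify.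
Set Implicit Arguments. Unset Strict Implicit. Unset Printing Implicit Defensive.

Section Inv.
Variables a b : nat.

Definition Inv (eqv adj : rel (KV a b)) : Prop :=
 [/\ (forall x, eqv x x), (forall x y, eqv x y -> eqv y x),
     (forall x y z, eqv x y -> eqv y z -> eqv x z),
     (forall x y, eqv x y -> x.1 = y.1) &
     ((forall x y (l : 'I_b.+1), eqv x y -> x.2 <= l <= y.2 -> eqv x (x.1, l)) /\
     (forall x y, adj x y -> exists x' y', [/\ eqv x x', eqv y y' & x'.2 = y'.2]))].

Lemma merge_char (X : Type) (eqv : rel X) x y
  (sym : forall x y, eqv x y -> eqv y x)
  (trans : forall x y z, eqv x y -> eqv y z -> eqv x z) u v :
  [|| eqv u v, eqv u x && eqv v y | eqv u y && eqv v x] =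
  eqv u v || ((eqv u x || eqv u y) && (eqv v x || eqv v y)).
Proof.
have E p : eqv u p -> eqv v p -> eqv u v by move=> h1 h2; exact: trans h1 (sym _ _ h2).
case Huv: (eqv u v) => //=.
by case Hux: (eqv u x); case Huy: (eqv u y); case Hvx: (eqv v x);
  case Hvy: (eqv v y) => //=; rewrite ?(E _ Hux Hvx) ?(E _ Huy Hvy) in Huv.
Qed.

Lemma obt_inv eqv adj : obtainable eqv adj -> Inv eqv adj.
Proof.
elim => {eqv adj}.
- split.
  + by move=> x /=.
  + by move=> x y /eqP ->.
  + by move=> x y z /eqP -> /eqP ->.
  + by move=> x y /eqP ->.
  split.
  + move=> x y l /eqP <- /andP [h1 h2].
    have -> : l = x.2 by apply/val_inj/eqP; rewrite eqn_leq h2 h1.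
    by case: x {h1 h2}.
  + by move=> x y /andP [/eqP h _]; exists x, y; split.
- move=> eqv adj x y _ [r s t I2 [I3 I5]] hrow hcol hne.
  cbv zeta.
  have C := merge_char x y s t.
  have M u p : eqv u p -> (eqv u x || eqv u y) = (eqv p x || eqv p y).
    move=> hup; apply/idP/idP => /orP [] h; apply/orP.
    - by left; apply: t (s _ _ hup) h.
    - by right; apply: t (s _ _ hup) h.
    - by left; apply: t hup h.
    - by right; apply: t hup h.
  have T' u v w : [|| eqv u v, eqv u x && eqv v y | eqv u y && eqv v x] ->
       [|| eqv v w, eqv v x && eqv w y | eqv v y && eqv w x] ->
       [|| eqv u w, eqv u x && eqv w y | eqv u y && eqv w x].
    rewrite !C => /orP [h1|/andP [h1 h2]] /orP [h3|/andP [h3 h4]].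
    - by rewrite (t _ _ _ h1 h3).
    - by rewrite (M _ _ h1) h3 h4 orbT.
    - by rewrite (M _ _ (s _ _ h3)) h1 h2 orbT.
    - by rewrite h1 h4 orbT.
  split.
  + by move=> u; rewrite r.
  + by move=> u v; rewrite !C => /orP [h|/andP [h1 h2]]; rewrite ?(s _ _ h) // h1 h2 orbT.
  + exact: T'.
  + move=> u v /or3P [h|/andP [h1 h2]|/andP [h1 h2]]; first exact: I2.
    * by rewrite (I2 _ _ h1) hrow (I2 _ _ h2).
    * by rewrite (I2 _ _ h1) -hrow (I2 _ _ h2).
  split.
  + move=> u v l /or3P [h|/andP [h1 h2]|/andP [h1 h2]] hl.
    * by rewrite (I3 _ _ _ h hl).
    * have ru : u.1 = x.1 by exact: I2 h1.
      have rv : v.1 = y.1 by exact: I2 h2.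
      case: (leqP l x.2) => hlx.
      - by rewrite (I3 u x l h1) //; move/andP: hl => [->].
      - have hy : eqv y (y.1, l).
          apply: I3 (s _ _ h2) _; rewrite hcol hlx /=.
          by case/andP: hl.
        by rewrite ru hrow (s _ _ hy) h1 orbT.
    * have ru : u.1 = y.1 by exact: I2 h1.
      have rv : v.1 = x.1 by exact: I2 h2.
      case: (leqP l x.2) => hlx.
      - rewrite (I3 u y l h1) //; move/andP: hl => [-> _].
        by rewrite hcol ltnW.
      - have hx : eqv x (x.1, l).
          apply: I3 (s _ _ h2) _; rewrite (ltnW hlx) /=.
          by case/andP: hl.
        by rewrite ru -hrow (s _ _ hx) h1 !orbT.
  + move=> u v /andP [_ /existsP [u' /existsP [v' /and3P [h1 h2 h3]]]].
    have [u'' [v'' [h4 h5 h6]]] := I5 _ _ h3.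
    exists u'', v''; split => //.
    * by apply: T' h1 _; rewrite h4.
    * by apply: T' h2 _; rewrite h5.
- move=> eqv adj x y _ [r s t I2 [I3 I5]] _; split => //; split => //.
  by move=> u v /andP [h _]; exact: I5.
Qed.

End Inv.

Section Key.
Variables a b : nat.

Definition Sadj (T' : eqType) (g : KV a b -> T') (p q : T') : bool :=
  [exists x', exists y', [&& g x' == p, g y' == q, x'.2 == y'.2 & x'.1 != y'.1]].

Definition lay1 (T' : eqType) (g : KV a b -> T') :=
  (forall x y, g x = g y -> x.1 = y.1) /\
  (forall i (j k l : 'I_b.+1), j <= l <= k -> g (i,j) = g (i,k) -> g (i,l) = g (i,j)).

Definition jset (T' : eqType) (g : KV a b -> T') :=
  [set x : KV a b | (x.2 < b) && (g x == g (x.1, inord x.2.+1))].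

Lemma lay1_inj (T' : eqType) (g : KV a b -> T') : lay1 g -> #|jset g| = 0 -> injective g.
Proof.
move=> [H1 H2] /card0_eq h0.
suff W x y : g x = g y -> x.2 <= y.2 -> x = y.
  by move=> x y hxy; case: (leqP x.2 y.2) => h; [|apply/esym]; apply: W => //; apply: ltnW.
case: x => i j; case: y => i' k hxy hle.
have /= ri := H1 _ _ hxy; subst i'.
case: (ltnP j k) => hjk; last first.
  by have -> : j = k by apply/val_inj/eqP; rewrite /= eqn_leq hle hjk.
have hb : j.+1 < b.+1 by apply: (leq_ltn_trans hjk); exact: ltn_ord.
have hl : (inord j.+1 : 'I_b.+1) = j.+1 :> nat by rewrite inordK.
have := H2 i j k (inord j.+1); rewrite hl leqnSn hjk => /(_ isT hxy) e.
have : (i, j) \in jset g by rewrite inE /= e eqxx andbT; move: hb; rewrite ltnS.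
by rewrite h0.
Qed.

Lemma phase1_base (T' : eqType) (g : KV a b -> T') : lay1 g -> #|jset g| = 0 ->
  exists eqv adj, obtainable eqv adj /\ (forall x y, eqv x y = (g x == g y)) /\
                  (forall x y, adj x y = Sadj g (g x) (g y)).
Proof.
move=> L h0; have inj := lay1_inj L h0.
exists (fun x y => x == y), (fun x y => (x.2 == y.2) && (x.1 != y.1)).
split; first exact: obt_start.
split; first by move=> x y; rewrite (inj_eq inj).
move=> x y; apply/idP/idP.
  by move=> h; apply/existsP; exists x; apply/existsP; exists y; rewrite !eqxx.
by move=> /existsP [x' /existsP [y' /and4P [/eqP /inj -> /eqP /inj -> h1 h2]]]; rewrite h1 h2.
Qed.

Lemma phase1_step (T' : eqType) (g : KV a b -> T') (x0 : KV a b) : lay1 g -> x0 \in jset g ->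
  exists2 g' : KV a b -> (T' * bool)%type, lay1 g' & 
  (#|jset g'| < #|jset g|) /\
  forall (eqv0 adj0 : rel (KV a b)), obtainable eqv0 adj0 -> (forall x y, eqv0 x y = (g' x == g' y)) ->
                  (forall x y, adj0 x y = Sadj g' (g' x) (g' y)) ->
  exists eqv adj, obtainable eqv adj /\ (forall x y, eqv x y = (g x == g y)) /\
                  (forall x y, adj x y = Sadj g (g x) (g y)).
Proof.
move=> [H1 H2]; case: x0 => i j; rewrite inE /= => /andP [jb /eqP gx].
set y0 := (i, inord j.+1) : KV a b.
have hy0 : (inord j.+1 : 'I_b.+1) = j.+1 :> nat by rewrite inordK.
pose c (x : KV a b) := (x.1 == i) && (j < x.2).
exists (fun x => (g x, c x)).
  split.
    by move=> x y [] /H1.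
  move=> i0 j1 k1 l /andP [h1 h2] [] e1 e2.
  rewrite (H2 i0 j1 k1 l) ?h1 ?h2 //; congr pair; move: e2; rewrite /c /=.
  case: (i0 == i) => //=; case: (ltnP j j1) => h3 /=.
    by move=> _; apply: leq_trans h1.
  move=> e; apply/negbTE; rewrite -leqNgt; apply: leq_trans h2 _.
  by move: e => /esym /negbT; rewrite -leqNgt.
split.
  apply: proper_card; apply/properP; split.
    apply/subsetP => x; rewrite !inE => /andP [-> /eqP [] -> _] /=; by rewrite eqxx.
  exists (i, j); first by rewrite inE /= gx eqxx andbT.
  by rewrite inE /= negb_and; apply/orP; right; rewrite xpair_eqE negb_and; apply/orP; right;
     rewrite /c /= eqxx /= hy0 ltnn leqnn.
move=> eqv0 adj0 Hob E0 A0.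
have hne : ~~ eqv0 (i, j) y0.
  by rewrite E0 xpair_eqE negb_and /c /= hy0 ltnn leqnn eqxx orbT.
have H := @obt_identify a b eqv0 adj0 (i, j) y0 Hob (erefl i) hy0 hne.
have Eq' u v : [|| eqv0 u v, eqv0 u (i, j) && eqv0 v y0 | eqv0 u y0 && eqv0 v (i, j)]
               = (g u == g v).
  rewrite !E0 !xpair_eqE /y0 /= -gx.
  apply/idP/idP.
    by case/or3P => [/andP [/eqP -> _] | /and3P [/andP [/eqP -> _] /eqP -> _] | /and3P [/andP [/eqP -> _] /eqP -> _]].
  move=> /eqP guv; rewrite guv eqxx /=.
  case: u v guv => [iu ju] [iv jv] /= guv.
  have ri := H1 _ _ guv; rewrite /= in ri; subst iv.
  rewrite /c /= eqxx hy0 ltnn ltnSn /=.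
  case: (eqVneq iu i) guv => [->|_] guv //=; rewrite ?eqxx ?andbT ?andbF ?orbF /=.
  case: (ltnP j ju) => h1; case: (ltnP j jv) => h2 //=; rewrite ?andbT ?andbF ?orbF.
  - rewrite andbb; apply/eqP/esym; apply: (H2 i jv ju j) (esym guv).
    by rewrite h2 ltnW.
  - rewrite andbb; apply/eqP; rewrite -guv; apply/esym; apply: (H2 i ju jv j) guv.
    by rewrite h1 ltnW.
eexists; eexists; split; first exact: H.
split; first exact: Eq'.
move=> u v /=; rewrite Eq'; apply/idP/idP.
  move=> /andP [_ /existsP [u' /existsP [v' /and3P [h1 h2 h3]]]].
  move: h1 h2 h3; rewrite !Eq' A0 => /eqP h1 /eqP h2.
  move=> /existsP [x' /existsP [y' /and4P [/eqP [e1 _] /eqP [e2 _] h4 h5]]].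
  apply/existsP; exists x'; apply/existsP; exists y'.
  by rewrite e1 e2 h1 h2 !eqxx h4 h5.
move=> /existsP [x' /existsP [y' /and4P [/eqP e1 /eqP e2 h4 h5]]].
apply/andP; split.
  apply/negP => /eqP guv; move: h5; rewrite (H1 x' y') ?eqxx //.
  by rewrite e1 e2.
apply/existsP; exists x'; apply/existsP; exists y'.
rewrite !Eq' e1 e2 !eqxx /= A0.
by apply/existsP; exists x'; apply/existsP; exists y'; rewrite !eqxx h4 h5.
Qed.

Lemma phase1 n : forall (T' : eqType) (g : KV a b -> T'), lay1 g -> #|jset g| <= n ->
  exists eqv adj, obtainable eqv adj /\ (forall x y, eqv x y = (g x == g y)) /\
                  (forall x y, adj x y = Sadj g (g x) (g y)).
Proof.
elim: n => [|n IH] T' g L hn; case: (posnP #|jset g|) => [h0|/card_gt0P [x0 hx0]];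
  try exact: phase1_base.
  by move: hn; rewrite leqn0 => /eqP h; rewrite (card0_eq h) in hx0.
have [g' L' [hlt hfin]] := phase1_step L hx0.
have hn' : #|jset g'| <= n by rewrite -ltnS; apply: leq_trans hlt hn.
have [eqv0 [adj0 [Hob [E0 A0]]]] := IH _ g' L' hn'.
exact: hfin Hob E0 A0.
Qed.
End Key.

Section Phase2.
Variables (a b : nat) (T : finType) (e : rel T) (e_sym : symmetric e) (e_irr : irreflexive e).
Variables (g : KV a b -> T) (f : T -> KV a b) (gf : forall t, g (f t) = t).

Lemma phase2 n : forall s : rel T, #|[set p : T * T | s p.1 p.2 && ~~ e p.1 p.2]| <= n ->
  (forall p q, e p q -> s p q) -> forall eqv adj, obtainable eqv adj ->
  (forall x y, eqv x y = (g x == g y)) -> (forall x y, adj x y = s (g x) (g y)) ->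
  exists eqv adj, obtainable eqv adj /\ (forall x y, eqv x y = (g x == g y)) /\
                  (forall x y, adj x y = e (g x) (g y)).
Proof.
elim: n => [|n IH] s hn es eqv adj Hob E A;
  case: (posnP #|[set p : T * T | s p.1 p.2 && ~~ e p.1 p.2]|) => [h0|/card_gt0P [[p q] hpq]].
- exists eqv, adj; split => //; split => // x y; rewrite A.
  have := card0_eq h0 (g x, g y); rewrite inE /=.
  by case: (e (g x) (g y)) (es (g x) (g y)) => [->|] //; rewrite andbT => _ ->.
- by move: hn; rewrite leqn0 => /eqP h; rewrite (card0_eq h) in hpq.
- exists eqv, adj; split => //; split => // x y; rewrite A.
  have := card0_eq h0 (g x, g y); rewrite inE /=.
  by case: (e (g x) (g y)) (es (g x) (g y)) => [->|] //; rewrite andbT => _ ->.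
move: (hpq); rewrite inE /= => /andP [spq npq].
have hxy : adj (f p) (f q) by rewrite A !gf.
have H := obt_delete Hob hxy.
pose s' := fun p' q' => s p' q' && ~~ ((p' == p) && (q' == q) || (p' == q) && (q' == p)).
apply: (IH s' _ _ _ _ H E).
- rewrite -ltnS; apply: leq_trans hn; apply: proper_card; apply/properP; split.
    by apply/subsetP => [[u v]]; rewrite !inE /= /s' => /andP [/andP [-> _] ->].
  exists (p, q); first exact: hpq.
  by rewrite inE /= /s' !eqxx /= andbF.
- move=> p' q' epq; rewrite /s' es //=.
  apply/negP => /orP [] /andP [/eqP ep /eqP eq]; subst p' q'.
    by rewrite epq in npq.
  by rewrite e_sym epq in npq.
- by move=> u v /=; rewrite A !E !gf.
Qed.

End Phase2.

Lemma key (a b : nat) (T : finType) (e : rel T) (e_sym : symmetric e) (e_irr : irreflexive e)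
  (g : KV a b -> T) (f : T -> KV a b) (gf : forall t, g (f t) = t) :
  lay1 g -> (forall x y, e (g x) (g y) -> exists x' y', [/\ g x' = g x, g y' = g y & x'.2 = y'.2]) ->
  exists eqv adj : rel (KV a b), obtainable eqv adj /\ iso_to_quotient e eqv adj.
Proof.
move=> L H3.
have [eqv0 [adj0 [Hob [E0 A0]]]] := phase1 L (leqnn _).
have es : forall p q, e p q -> Sadj g p q.
  move=> p q epq; have := H3 (f p) (f q); rewrite !gf => /(_ epq) [x' [y' [h1 h2 h3]]].
  apply/existsP; exists x'; apply/existsP; exists y'; rewrite h1 h2 h3 !eqxx /=.
  apply/negP => /eqP r; have exy : x' = y' by case: x' y' r h3 {h1 h2} => [? ?] [? ?] /= -> ->.
  by move: epq; rewrite -h1 -h2 exy e_irr.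
have [eqv [adj [Hob' [E A]]]] := phase2 e_sym gf (leqnn _) es Hob E0 A0.
exists eqv, adj; split => //; exists f; split.
- by move=> t t'; rewrite E !gf => /eqP.
split.
- by move=> v; exists (g v); rewrite E gf.
- by move=> t t'; rewrite A !gf.
Qed.

Section Gen.
Variables (T : finType) (e : rel T).

Lemma ptF_le B F m : hopU e B F m = setT -> exists2 k, ptF e B F = Some k & k <= m.
Proof.
move=> hU; rewrite /ptF; case: pselect => [h|n].
  exists (ex_minn h) => //; case: ex_minnP => k _ H; apply: H; by rewrite hU eqxx.
by exfalso; apply: n; exists m; rewrite hU eqxx.
Qed.

Lemma hopU_sub B F k : hopU e B F k \subset B :|: [set w | [exists v, (v, w) \in F]].
Proof.
elim: k => [|k IH] /=; first exact: subsetUl.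
rewrite subUset IH /=; apply/subsetP => w; rewrite inE => /existsP [v /and3P [h _ _]].
by rewrite !inE; apply/orP; right; apply/existsP; exists v.
Qed.

Lemma ptB_le B s m : chron_list e B s -> hopU e B [set x in s] m = setT ->
  exists2 p, ptB e B = Some p & p <= m.
Proof.
move=> hc hU.
have hfs : hopping_forcing_set e B.
  exists s; split => //; apply/eqP; rewrite eqEsubset subsetT /=.
  rewrite -hU; apply: subset_trans (hopU_sub _ _ _) _.
  apply/subsetP => w; rewrite !inE => /orP [->//|/existsP [v hv]].
  by apply/orP; right; apply/existsP; exists v; rewrite inE in hv.
have [k hk km] := ptF_le hU.
rewrite /ptB; case: pselect => [h1|n1]; last by exfalso; apply: n1.
case: pselect => [h|n].
  exists (ex_minn h) => //; case: ex_minnP => p _ H; apply: leq_trans km; apply: H.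
  by apply/asboolP; exists [set x in s]; split => //; exists s.
by exfalso; apply: n; exists k; apply/asboolP; exists [set x in s]; split => //; exists s.
Qed.

Lemma thH_le B p : ptB e B = Some p -> thH e <= #|B| + p.
Proof.
move=> hp; rewrite /thH; case: pselect => [h|n].
  case: ex_minnP => m _ H; apply: H; apply/asboolP; by exists B, p.
by exfalso; apply: n; exists (#|B| + p); apply/asboolP; exists B, p.
Qed.

End Gen.

Section LayTh.
Variables (a b : nat) (T : finType) (e : rel T).
Variables (g : KV a b -> T) (f : T -> KV a b) (gf : forall t, g (f t) = t).
Hypothesis L : lay1 g.
Hypothesis H3 : forall x y, e (g x) (g y) -> exists x' y', [/\ g x' = g x, g y' = g y & x'.2 = y'.2].

Definition cell (i : 'I_a) (j : nat) : KV a b := (i, inord j).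

Lemma cellK (x : KV a b) : cell x.1 x.2 = x.
Proof. by case: x => i j; rewrite /cell inord_val. Qed.

Lemma cell2 i j : j <= b -> (cell i j).2 = j :> nat.
Proof. by move=> h; rewrite /= inordK. Qed.

Lemma H1 x y : g x = g y -> x.1 = y.1.
Proof. by case: L => h _; exact: h. Qed.

Lemma conv i j k l : j <= l <= k -> k <= b -> g (cell i j) = g (cell i k) ->
  g (cell i l) = g (cell i j).
Proof.
case: L => _ H2 /andP [h1 h2] hk.
have hl : l <= b by apply: leq_trans h2 hk.
have hj : j <= b by apply: leq_trans h1 hl.
apply: H2; by rewrite !inordK // ?h1 ?h2.
Qed.

Definition newc i j := g (cell i j) != g (cell i j.+1).

Lemma NB i j u : j < b -> newc i j -> e (g (cell i j)) u -> exists y : KV a b, y.2 <= j /\ g y = u.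
Proof.
move=> jb nc heu.
have := @H3 (cell i j) (f u); rewrite gf => /(_ heu) [x' [y' [h1 h2 h3]]].
exists y'; split => //; rewrite -h3 leqNgt; apply/negP => hx.
have ri : x'.1 = i by rewrite (H1 h1).
have ex : cell i x'.2 = x' by rewrite -ri cellK.
move: nc; rewrite /newc (@conv i j x'.2 j.+1) ?eqxx //.
- by rewrite leqnSn hx.
- by rewrite -ltnS ltn_ord.
- by rewrite ex.
Qed.

Definition blueS (h : 'I_a -> nat) := [set t | [exists x : KV a b, (x.2 <= h x.1) && (g x == t)]].
Definition usedS (h : 'I_a -> nat) :=
  [set t | [exists x : KV a b, [&& x.2 < h x.1, newc x.1 x.2 & g x == t]]].

Lemma usedS_mono h h' : (forall i, h i <= h' i) -> usedS h \subset usedS h'.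
Proof.
move=> hh; apply/subsetP => t; rewrite !inE => /existsP [x /and3P [h1 h2 h3]].
by apply/existsP; exists x; rewrite h2 h3 (leq_trans h1 (hh _)).
Qed.

Lemma blue_upd h h' i0 : h i0 < b -> h' i0 = (h i0).+1 -> (forall i, i != i0 -> h' i = h i) ->
  blueS h' = g (cell i0 (h i0).+1) |: blueS h.
Proof.
move=> hb e0 eo; apply/setP => t; rewrite !inE; apply/idP/idP.
  move=> /existsP [x /andP [hx /eqP <-]].
  case: (eqVneq x.1 i0) => [r|nr].
    move: hx; rewrite r e0 leq_eqVlt => /orP [/eqP xe|hx].
      by apply/orP; left; rewrite -xe -r cellK.
    by apply/orP; right; apply/existsP; exists x; rewrite r -ltnS hx eqxx.
  by apply/orP; right; apply/existsP; exists x; rewrite -(eo _ nr) hx eqxx.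
move=> /orP [/eqP ->|/existsP [x /andP [hx /eqP <-]]].
  by apply/existsP; exists (cell i0 (h i0).+1); rewrite cell2 // e0 leqnn eqxx.
apply/existsP; exists x; rewrite eqxx andbT.
case: (eqVneq x.1 i0) => [r|nr]; last by rewrite eo.
by rewrite r e0; rewrite r in hx; apply: leq_trans hx _.
Qed.

Section Inner.
Variables (j : nat) (jb : j < b).

Lemma force_ok h i0 (us : {set T}) : (forall i, j <= h i <= j.+1) -> h i0 = j -> newc i0 j ->
  us \subset usedS h -> hop_can_force e (blueS h) us (g (cell i0 j)) (g (cell i0 j.+1)).
Proof.
move=> hr h0 nc hus.
have jb' : j <= b by apply: ltnW.
apply/and4P; split.
- by rewrite inE; apply/existsP; exists (cell i0 j); rewrite cell2 // h0 leqnn eqxx.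
- apply/negP => /(subsetP hus); rewrite inE => /existsP [x /and3P [hx nx /eqP gx]].
  have ri : x.1 = i0 by rewrite (H1 gx).
  have ex : cell i0 x.2 = x by rewrite -ri cellK.
  move: hx nx; rewrite ri h0 /newc => hx.
  rewrite (@conv i0 x.2 j x.2.+1) ?eqxx //; first by rewrite leqnSn hx.
  by rewrite ex gx.
- apply/forallP => u; apply/implyP => heu.
  have [y [hy gy]] := NB jb nc heu.
  rewrite inE; apply/existsP; exists y; rewrite gy eqxx andbT.
  apply: leq_trans hy _; by case/andP: (hr y.1).
- apply/negP; rewrite inE => /existsP [x /andP [hx /eqP gx]].
  have ri : x.1 = i0 by rewrite (H1 gx).
  have ex : cell i0 x.2 = x by rewrite -ri cellK.
  move: hx nc; rewrite ri h0 /newc => hx.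
  by rewrite (@conv i0 x.2 j.+1 j) ?ex ?gx ?eqxx // hx leqnSn.
Qed.

Lemma inner (rest : seq (T * T)) : forall rs : seq 'I_a, uniq rs ->
  (forall h, (forall i, h i = j.+1) -> forall bl us : {set T}, bl = blueS h -> us \subset usedS h ->
      chron_ok e bl us rest) ->
  forall h, (forall i, i \in rs -> h i = j) -> (forall i, i \notin rs -> h i = j.+1) ->
  forall bl us : {set T}, bl = blueS h -> us \subset usedS h ->
  chron_ok e bl us ([seq (g (cell i j), g (cell i j.+1)) | i <- rs & newc i j] ++ rest).
Proof.
elim => [|i0 rs IH] /= urs hrest h hin hout bl us hbl hus.
  by apply: (hrest h) => // i; apply: hout.
move: urs => /andP [ni0 urs].
pose h' := fun i => if i == i0 then j.+1 else h i.
have hr : forall i, j <= h i <= j.+1.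
  move=> i; case: (boolP (i \in i0 :: rs)) => hi.
    by rewrite hin // leqnn leqnSn.
  by rewrite hout // leqnSn leqnn.
have h0 : h i0 = j by rewrite hin // mem_head.
have hin' : forall i, i \in rs -> h' i = j.
  move=> i hi; rewrite /h'; case: eqP => [ei|_]; first by subst i; rewrite hi in ni0.
  by rewrite hin // inE hi orbT.
have hout' : forall i, i \notin rs -> h' i = j.+1.
  move=> i hi; rewrite /h'; case: eqP => // /eqP ni; rewrite hout //.
  by rewrite inE negb_or ni.
have upd : blueS h' = g (cell i0 j.+1) |: blueS h.
  have := @blue_upd h h' i0; rewrite h0; apply.
  - exact: jb.
  - by rewrite /h' eqxx.
  - by move=> i /negbTE; rewrite /h' => ->.
have mono : usedS h \subset usedS h'.
  by apply: usedS_mono => i; rewrite /h'; case: eqP => // ->; rewrite h0.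
case: ifP => nc /=.
  apply/andP; split; first by rewrite hbl; apply: force_ok.
  have := IH urs hrest h' hin' hout' (g (cell i0 j.+1) |: bl) (g (cell i0 j) |: us).
  apply; first by rewrite upd hbl.
  rewrite subUset (subset_trans hus mono) andbT sub1set inE.
  by apply/existsP; exists (cell i0 j); rewrite (cell2 _ (ltnW jb)) /= /h' eqxx ltnSn nc eqxx.
have := IH urs hrest h' hin' hout' bl us; apply; last exact: subset_trans hus mono.
rewrite upd hbl; apply/esym/setUidPr; rewrite sub1set inE; apply/existsP; exists (cell i0 j).
by rewrite (cell2 _ (ltnW jb)) h0 leqnn; move/negbFE: nc => ->.
Qed.

End Inner.

Definition block j := [seq (g (cell i j), g (cell i j.+1)) | i <- enum 'I_a & newc i j].
Definition slist := flatten [seq block j | j <- iota 0 b].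

Lemma outer k : forall j, j + k = b -> forall h, (forall i, h i = j) ->
  forall bl us : {set T}, bl = blueS h -> us \subset usedS h ->
  chron_ok e bl us (flatten [seq block j' | j' <- iota j k]).
Proof.
elim: k => [|k IH] j hjk h hh bl us hbl hus /=.
  apply/forallP => v; apply/forallP => w; rewrite /hop_can_force; apply/negP => /and4P [_ _ _].
  have hj : b <= j by rewrite -hjk addn0.
  rewrite hbl inE => /existsP []; exists (f w); rewrite gf eqxx andbT hh.
  by apply: leq_trans hj; rewrite -ltnS ltn_ord.
refine (@inner j _ _ (enum 'I_a) (enum_uniq _) _ h _ _ bl us hbl hus).
- by rewrite -hjk; lia.
- move=> h' hh' bl' us' hbl' hus'; apply: (IH j.+1 _ h') => //; by rewrite -hjk; lia.
- by move=> i _; apply: hh.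
- by move=> i; rewrite mem_enum.
Qed.

Definition B0 := blueS (fun _ => 0).

Lemma chron_B0 : chron_list e B0 slist.
Proof. by apply: (outer (j := 0)) => //; apply: sub0set. Qed.

Lemma card_B0 : #|B0| = a.
Proof.
have -> : B0 = [set g (cell i 0) | i : 'I_a].
  apply/setP => t; rewrite inE; apply/existsP/imsetP.
    move=> [x /andP [hx /eqP <-]]; exists x.1 => //.
    by congr g; rewrite -{1}(cellK x); congr cell; move: hx; rewrite leqn0 => /eqP.
  by move=> [i _ ->]; exists (cell i 0); rewrite cell2 // eqxx.
rewrite card_imset ?card_ord //.
by move=> i i' /H1.
Qed.

Lemma hopU_ge k : k <= b -> blueS (fun _ => k) \subset hopU e B0 [set x in slist] k.
Proof.
elim: k => [|k IH] hk /=; first exact: subxx.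
have IH' := IH (ltnW hk).
apply/subsetP => t; rewrite inE => /existsP [x /andP [hx /eqP gx]].
have Hk : g x \in blueS (fun _ => k) -> t \in hopU e B0 [set x in slist] k.+1.
  by move=> h /=; rewrite inE -gx (subsetP IH' _ h).
move: hx; rewrite leq_eqVlt ltnS => /orP [/eqP hx|hx]; last first.
  by apply: Hk; rewrite inE; apply/existsP; exists x; rewrite hx eqxx.
have ex : x = cell x.1 k.+1 by rewrite -{1}(cellK x) hx.
case: (boolP (newc x.1 k)) => nc; last first.
  apply: Hk; rewrite inE; apply/existsP; exists (cell x.1 k).
  by rewrite (cell2 _ (ltnW hk)) leqnn ex; move/negbNE: nc => ->.
rewrite inE; apply/orP; right; rewrite inE; apply/existsP; exists (g (cell x.1 k)).
apply/and3P; split.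
- rewrite inE; apply/flatten_mapP; exists k; first by rewrite mem_iota.
  rewrite -gx ex; apply/mapP; exists x.1 => //; by rewrite mem_filter nc mem_enum.
- apply: (subsetP IH'); rewrite inE; apply/existsP; exists (cell x.1 k).
  by rewrite (cell2 _ (ltnW hk)) leqnn eqxx.
- apply/forallP => u; apply/implyP => heu.
  have [y [hy gy]] := NB hk nc heu.
  apply: (subsetP IH'); rewrite inE; apply/existsP; exists y; by rewrite hy gy eqxx.
Qed.

Lemma lay_th : thH e <= a + b.
Proof.
have hU : hopU e B0 [set x in slist] b = setT.
  apply/eqP; rewrite eqEsubset subsetT /=; apply: subset_trans (hopU_ge (leqnn b)).
  apply/subsetP => t _; rewrite inE; apply/existsP; exists (f t); rewrite gf eqxx andbT.
  by rewrite -ltnS ltn_ord.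
have [p hp pb] := ptB_le chron_B0 hU.
apply: leq_trans (thH_le hp) _; by rewrite card_B0 leq_add2l.
Qed.

End LayTh.

Lemma obt_th (a b : nat) (T : finType) (e : rel T) (eqv adj : rel (KV a b)) :
  obtainable eqv adj -> iso_to_quotient e eqv adj -> thH e <= a + b.
Proof.
move=> /obt_inv [r s tr I2 [I3 I5]] [f [finj [fsurj fadj]]].
pose g v := xchoose (fsurj v).
have hg v : eqv v (f (g v)) := xchooseP (fsurj v).
have eg x y : eqv x y -> g x = g y.
  move=> h; apply: finj; apply: (tr _ _ _ (s _ _ (hg x))); exact: (tr _ _ _ h (hg y)).
have ge x y : g x = g y -> eqv x y.
  by move=> h; apply: (tr _ _ _ (hg x)); rewrite h; apply: s.
have gf t0 : g (f t0) = t0 by apply/esym/finj/hg.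
apply: (@lay_th a b T e g f gf).
  split; first by move=> x y /ge /I2.
  move=> i j k l hl /ge h; apply/esym/eg; exact: I3 h hl.
move=> x y; rewrite fadj => /I5 [x' [y' [h1 h2 h3]]].
exists x', y'; split => //.
- by apply/esym; rewrite -[in LHS](gf (g x)); apply: eg.
- by apply/esym; rewrite -[in LHS](gf (g y)); apply: eg.
Qed.

Lemma chron_facts (T : finType) (e : rel T) blue used s : chron_ok e blue used s ->
  [/\ uniq (map fst s), uniq (map snd s), all (fun q => q.2 \notin blue) s &
      all (fun q => q.1 \notin used) s].
Proof.
elim: s blue used => [|[v w] s IH] blue used /=; first by [].
move=> /andP [/and4P [_ nu _ nb] /IH [u1 u2 a1 a2]].
have a1' : all (fun q => q.2 \notin blue) s.
  by apply/allP => q /(allP a1); rewrite inE negb_or => /andP [].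
have a2' : all (fun q => q.1 \notin used) s.
  by apply/allP => q /(allP a2); rewrite inE negb_or => /andP [].
rewrite u1 u2 nu nb a1' a2' !andbT /=; split => //.
  by apply/negP => /mapP [q /(allP a2)]; rewrite !inE negb_or => /andP [/eqP ne _] /= e'; exact: ne (esym e').
by apply/negP => /mapP [q /(allP a1)]; rewrite !inE negb_or => /andP [/eqP ne _] /= e'; exact: ne (esym e').
Qed.

Lemma uniq_fst (X Y : eqType) (s : seq (X * Y)) v w w' :
  uniq (map fst s) -> (v, w) \in s -> (v, w') \in s -> w = w'.
Proof.
elim: s => [|[v0 w0] s IH] //= /andP [nv us].
have H z : (v, z) \in s -> v0 = v -> False.
  by move=> hz ev; move: nv; rewrite ev; case/negP; apply/mapP; exists (v, z).
rewrite !inE => /orP [/eqP [e1 e2]|h1] /orP [/eqP [e3 e4]|h2].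
- by rewrite e2 e4.
- by case: (H _ h2).
- by case: (H _ h1).
- exact: IH.
Qed.

Lemma uniq_snd (X Y : eqType) (s : seq (X * Y)) v v' w :
  uniq (map snd s) -> (v, w) \in s -> (v', w) \in s -> v = v'.
Proof.
elim: s => [|[v0 w0] s IH] //= /andP [nv us].
have H z : (z, w) \in s -> w0 = w -> False.
  by move=> hz ev; move: nv; rewrite ev; case/negP; apply/mapP; exists (z, w).
rewrite !inE => /orP [/eqP [e1 e2]|h1] /orP [/eqP [e3 e4]|h2].
- by rewrite e1 e3.
- by case: (H _ h2).
- by case: (H _ h1).
- exact: IH.
Qed.

Section GC.
Variables (T : finType) (e : rel T) (e_sym : symmetric e).
Variables (B : {set T}) (s : seq (T * T)) (p : nat).
Hypothesis hc : chron_list e B s.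
Hypothesis hU : hopU e B [set x in s] p = setT.

Let F := [set x in s].

Lemma hopU_mono k k' : k <= k' -> hopU e B F k \subset hopU e B F k'.
Proof.
move=> /subnK <-; elim: (k' - k) => [|d IH]; first exact: subxx.
by rewrite addSn /=; apply: subset_trans IH (subsetUl _ _).
Qed.

Lemma inUp t : exists k, t \in hopU e B F k.
Proof. by exists p; rewrite hU inE. Qed.

Definition tau t := ex_minn (inUp t).

Lemma tauP t k : (t \in hopU e B F k) = (tau t <= k).
Proof.
rewrite /tau; case: ex_minnP => m hm hmin; apply/idP/idP; first exact: hmin.
by move=> hk; apply: (subsetP (hopU_mono hk)).
Qed.

Lemma tau_le_p t : tau t <= p.
Proof. by rewrite -tauP hU inE. Qed.

Lemma tau0 t : (tau t == 0) = (t \in B).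
Proof. by rewrite -leqn0 -tauP. Qed.

Lemma cf : [/\ uniq (map fst s), uniq (map snd s), all (fun q => q.2 \notin B) s &
      all (fun q => q.1 \notin set0) s].
Proof. exact: chron_facts hc. Qed.

Lemma F2 v w w' : (v, w) \in s -> (v, w') \in s -> w = w'.
Proof. by case: cf => u1 _ _ _; exact: uniq_fst. Qed.

Lemma F3 v v' w : (v, w) \in s -> (v', w) \in s -> v = v'.
Proof. by case: cf => _ u2 _ _; exact: uniq_snd. Qed.

Lemma T1 t k : tau t = k.+1 -> exists v, [/\ (v, t) \in s, tau v <= k &
  forall u, e v u -> tau u <= k].
Proof.
move=> ht.
have h1 : t \in hopU e B F k.+1 by rewrite tauP ht.
have h2 : t \notin hopU e B F k by rewrite tauP ht ltnn.
move: h1 => /=; rewrite inE (negbTE h2) /= inE => /existsP [v /and3P [hv hvu hn]].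
exists v; split.
- by rewrite inE in hv.
- by rewrite -tauP.
- by move=> u heu; rewrite -tauP; move/forallP: hn => /(_ u); rewrite heu.
Qed.

Fixpoint Gf (i : 'I_#|B|) (j : nat) : T :=
  match j with
  | 0 => enum_val i
  | j'.+1 => let v := Gf i j' in
      if [pick w | ((v, w) \in s) && (tau w == j'.+1)] is Some w then w else v
  end.

Lemma G2 i j : Gf i j.+1 = Gf i j \/ ((Gf i j, Gf i j.+1) \in s /\ tau (Gf i j.+1) = j.+1).
Proof.
rewrite /=; case: pickP => [w /andP [h1 /eqP h2]|_]; last by left.
by right.
Qed.

Lemma G1 i j : tau (Gf i j) <= j.
Proof.
elim: j => [|j IH].
  by rewrite leqn0 tau0; apply: enum_valP.
by case: (G2 i j) => [->|[_ ->]] //; apply: leq_trans IH _.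
Qed.

Lemma G3 i j u : Gf i j = u -> forall l, tau u <= l <= j -> Gf i l = u.
Proof.
elim: j u => [|j IH] u hu l /andP [h1 h2].
  by move: h2; rewrite leqn0 => /eqP ->.
move: h2; rewrite leq_eqVlt => /orP [/eqP ->//|]; rewrite ltnS => h2.
case: (G2 i j) => [e1|[_ e2]].
  by apply: IH; rewrite -?e1 // h1 h2.
by move: h1; rewrite -hu e2 => h1; move: (leq_trans h1 h2); rewrite ltnn.
Qed.

Lemma G4 i i' j : Gf i j = Gf i' j -> i = i'.
Proof.
elim: j => [|j IH]; first exact: enum_val_inj.
case: (G2 i j) => [e1|[s1 t1]]; case: (G2 i' j) => [e2|[s2 t2]].
- by rewrite e1 e2; apply: IH.
- move=> h; move: (G1 i j); rewrite -e1 h t2 ltnn //.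
- move=> h; move: (G1 i' j); rewrite -e2 -h t1 ltnn //.
- move=> h; apply: IH; apply: (F3 s1); by rewrite h.
Qed.

Lemma GH1 i i' j j' : Gf i j = Gf i' j' -> i = i'.
Proof.
move=> h; set u := Gf i j.
have a1 := @G3 i j u (erefl u) (tau u).
have a2 := @G3 i' j' u (esym h) (tau u).
apply: (@G4 _ _ (tau u)); rewrite a1 ?a2 //.
- by rewrite leqnn /u h G1.
- by rewrite leqnn G1.
Qed.

Lemma G5 i j v u : Gf i j = v -> e v u -> forall d, j + d <= tau u -> Gf i (j + d) = v.
Proof.
move=> hv heu; elim => [|d IH]; first by rewrite addn0.
move=> hd; have IH' : Gf i (j + d) = v by apply: IH; lia.
rewrite addnS; case: (G2 i (j + d)) => [->//|[s1 t1]]; exfalso.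
have [v' [hv' _ hn]] := T1 t1.
rewrite IH' in s1; have ev := F3 s1 hv'; subst v'.
have := hn u heu; lia.
Qed.

Lemma G6 t : exists i, Gf i (tau t) = t.
Proof.
suff H : forall n t, tau t <= n -> exists i, Gf i (tau t) = t by apply: (H (tau t)).
elim => [|n IH] t0 hn; case ht: (tau t0) => [|k].
- have h0 : t0 \in B by rewrite -tau0 ht.
  by exists (enum_rank_in h0 t0) => /=; rewrite enum_rankK_in.
- by rewrite ht in hn.
- have h0 : t0 \in B by rewrite -tau0 ht.
  by exists (enum_rank_in h0 t0) => /=; rewrite enum_rankK_in.
have [v [hvt hvk _]] := T1 ht.
have hvn : tau v <= n by move: hn; rewrite ht ltnS => hn'; apply: leq_trans hvk hn'.
have [i hi] := IH v hvn.
have Hd : forall d, tau v + d <= k -> Gf i (tau v + d) = v.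
  elim => [|d IHd]; first by rewrite addn0.
  move=> hd; have IH' : Gf i (tau v + d) = v by apply: IHd; lia.
  rewrite addnS; case: (G2 i (tau v + d)) => [->//|[s1 t1]]; exfalso.
  rewrite IH' in s1; have ew := F2 s1 hvt.
  by move: t1; rewrite ew ht => [[]]; lia.
have Hk : Gf i k = v by rewrite -(subnKC hvk); apply: Hd; rewrite subnKC.
exists i => /=; rewrite Hk; case: pickP => [w /andP [h1 _]|H].
  exact: F2 h1 hvt.
by move: (H t0); rewrite hvt ht eqxx.
Qed.

Variables (b : nat) (hpb : p <= b).

Definition gG (x : KV #|B| b) : T := Gf x.1 x.2.

Lemma G6b t : exists i, Gf i (tau t) == t.
Proof. by have [i hi] := G6 t; exists i; rewrite hi. Qed.

Definition fG (t : T) : KV #|B| b := (xchoose (G6b t), inord (tau t)).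

Lemma gfG t : gG (fG t) = t.
Proof.
rewrite /gG /fG /= inordK; first exact/eqP/(xchooseP (G6b t)).
by rewrite ltnS; apply: leq_trans (tau_le_p t) hpb.
Qed.

Lemma layG : lay1 gG.
Proof.
split; first by move=> x y; exact: GH1.
move=> i j k l hl h; rewrite /gG /=; apply: (@G3 i k); first by rewrite /gG /= in h; rewrite -h.
case/andP: hl => h1 h2; rewrite h2 andbT; apply: leq_trans h1; exact: G1.
Qed.

Lemma H3half x y : e (gG x) (gG y) -> tau (gG x) <= tau (gG y) ->
  exists x' y', [/\ gG x' = gG x, gG y' = gG y & x'.2 = y'.2].
Proof.
rewrite /gG => heu hle.
have hyb : tau (Gf y.1 y.2) <= b.
  by apply: leq_trans (G1 _ _) _; rewrite -ltnS ltn_ord.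
exists (x.1, inord (tau (Gf y.1 y.2))), (y.1, inord (tau (Gf y.1 y.2))); split => //=; rewrite inordK ?ltnS //.
- have hx := @G3 x.1 x.2 _ (erefl _) (tau (Gf x.1 x.2)).
  rewrite leqnn G1 in hx; have {}hx := hx isT.
  have := G5 hx heu (d := tau (Gf y.1 y.2) - tau (Gf x.1 x.2)).
  by rewrite subnKC // => ->.
- apply: (@G3 y.1 y.2); rewrite // leqnn; exact: G1.
Qed.

Lemma H3G x y : e (gG x) (gG y) -> exists x' y', [/\ gG x' = gG x, gG y' = gG y & x'.2 = y'.2].
Proof.
move=> heu; case: (leqP (tau (gG x)) (tau (gG y))) => h; first exact: H3half.
rewrite e_sym in heu; have [y' [x' [h1 h2 h3]]] := H3half heu (ltnW h).
by exists x', y'; split.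
Qed.

End GC.

Lemma thH_wit (T : finType) (e : rel T) :
  exists B p, ptB e B = Some p /\ thH e = #|B| + p.
Proof.
rewrite /thH; case: pselect => [h|n].
  case: ex_minnP => m /asboolP [B [p [hp ->]]] _; by exists B, p.
exfalso.
have hs : chron_list e [set: T] [::].
  apply/forallP => v; apply/forallP => w; by rewrite /hop_can_force !inE /= !andbF.
have [p hp _] := ptB_le hs (erefl _ : hopU e [set: T] [set x in [::]] 0 = setT).
by apply: n; exists (#|[set: T]| + p); apply/asboolP; exists [set: T], p.
Qed.

Lemma ptB_ext (T : finType) (e : rel T) B p : ptB e B = Some p ->
  exists s, chron_list e B s /\ hopU e B [set x in s] p = setT.
Proof.
rewrite /ptB; case: pselect => [h1|n1] //; case: pselect => [h2|n2] // [<-].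
case: ex_minnP => m /asboolP [F [[s [hs ->]] hF]] _.
exists s; split => //.
move: hF; rewrite /ptF; case: pselect => [h3|n3] // [<-].
by case: ex_minnP => k /eqP.
Qed.

Lemma hopU_set0 (T : finType) (e : rel T) F k : hopU e set0 F k = set0.
Proof.
elim: k => [|k IH] //=; rewrite IH set0U; apply/setP => w; rewrite !inE.
by apply/existsP => [[v]]; rewrite inE andbF.
Qed.

Theorem theorem3p14 (T : finType) (e : rel T)
  (e_sym : symmetric e) (e_irr : irreflexive e) (T_nonempty : 0 < #|T|)
  (t : nat) (t_pos : 0 < t) :
  thH e <= t <->
  exists a b : nat, 1 <= a /\ a + b = t /\
    exists eqv adj : rel (KV a b),
      obtainable eqv adj /\ iso_to_quotient e eqv adj.
Proof.
split; last first.
  move=> [a [b [_ [<- [eqv [adj [hob hiso]]]]]]]; exact: obt_th hob hiso.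
move=> hth.
have [B [p [hp hthe]]] := thH_wit e.
have [s [hs hU]] := ptB_ext hp.
have hB : 0 < #|B|.
  rewrite lt0n; apply/negP => /eqP /cards0_eq hB0.
  move: hU; rewrite hB0 hopU_set0 => h0.
  by move: T_nonempty; rewrite -cardsT -h0 cards0.
exists #|B|, (t - #|B|); split => //.
have hle : #|B| + p <= t by rewrite -hthe.
split; first by rewrite subnKC //; apply: leq_trans (leq_addr _ _) hle.
have hpb : p <= t - #|B| by rewrite leq_subRL //; apply: leq_trans (leq_addr _ _) hle.
apply: (key e_sym e_irr (gfG hs hU hpb)).
  exact: layG hs hU _.
move=> x y; exact: (H3G e_sym hs (hU:=hU) (x:=x) (y:=y)).
Qed.
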